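(* In the cell FDE setting described in the context, assume (H1), (H2), (H3) and $q(0)>0$. Let $\phi=(\varphi,\psi)\in X_+$ with $\varphi(0)>0$ and let $(w,v)=(w^\phi,v^\phi)$. If $v(t)\to0$ as $t\to\infty$, then $w(t)\to\infty$ as $t\to\infty$. In particular, $(w(t),v(t))$ does not converge to $(0,0)$ as $t\to\infty$.
   Context: Let $h>0$, $R_-<0$, $I:=(R_-,\infty)$. $\|\phi\|_0:=\max_{\theta\in[-h,0]}|\phi(\theta)|$, $\|\phi\|_1:=\|\phi\|_0+\|\phi'\|_0$; $x_t(s):=x(t+s)$, $s\in[-h,0]$. Let $U:=C^1([-h,0],\mathbb R)\times C^1([-h,0],I)$, $U_+:=C^1([-h,0],[0,\infty)^2)$, $q:I\to\mathbb R$, $j:U\to\mathbb R$, $\mu\ge0$. Cell FDE: $w'(t)=q(v(t))w(t)$, $v'(t)=j(w_t,v_t)-\mu v(t)$, $t>0$, $(w_0,v_0)=(\varphi,\psi)$. $F(\varphi,\psi):=(q(\psi(0))\varphi(0),j(\varphi,\psi)-\mu\psi(0))$, $X:=\{\phi\in U:\phi'(0)=F(\phi)\}$, $X_+:=X\cap U_+$. Solutions are $C^1$ maps $x=(w,v)$ on $[-h,t_* )$ with $x_0=\phi$, $x_t\in U$, satisfying the equations on $(0,t_* )$. (S): $f$ is $C^1$, each $Df(\phi)$ extends to a linear map on $C([-h,0],\mathbb R^n)$ and $(\phi,\chi)\mapsto D_ef(\phi)\chi$ is continuous. (sLb) on $\mathcal O_+$: for each $\|\cdot\|_1$-bounded $B\subset\mathcal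 O_+$ there is $L_B$ with $|f(\phi)-f(\chi)|\le L_B\|\phi-\chi\|_0$ on $B$. (H1): $j$ satisfies (S) on $U$, (sLb) on $U_+$, $j\ge0$ on $U_+$, and $j(B_1\times B_2)$ is bounded whenever $B_1\times B_2\subset U_+$ with $B_1$ bounded. (H2): $q$ bounded and $C^1$. (H3): $X_+\neq\emptyset$. Under (H1)-(H3) each $\phi\in X_+$ has a unique solution on $[-h,\infty)$ with segments in $X_+$. *)

(* Defs.v *)
From Stdlib Require Import Reals ClassicalEpsilon.
From Coquelicot Require Import Coquelicot.
Open Scope R_scope.

(* Functions on [-h,0] are represented as R -> R; only their values on
   [-h,0] are meaningful (functionals are required to respect this). *)
Definition seg (h s : R) : Prop := -h <= s <= 0.

Definition eq_on (D : R -> Prop) (f g : R -> R) : Prop := forall s, D s -> f s = g s.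

Definition fadd (f g : R -> R) : R -> R := fun s => f s + g s.
Definition fsub (f g : R -> R) : R -> R := fun s => f s - g s.

Definition cont_on (D : R -> Prop) (f : R -> R) : Prop :=
  forall s, D s -> forall eps, 0 < eps -> exists delta, 0 < delta /\
    forall y, D y -> Rabs (y - s) < delta -> Rabs (f y - f s) < eps.

(* f is C^1 on D with derivative f' (derivatives taken within D, i.e.
   one-sided at endpoints) *)
Definition is_C1_on (D : R -> Prop) (f f' : R -> R) : Prop :=
  cont_on D f' /\
  forall s, D s -> forall eps, 0 < eps -> exists delta, 0 < delta /\
    forall y, D y -> 0 < Rabs (y - s) < delta ->
      Rabs ((f y - f s) / (y - s) - f' s) <= eps.

Definition C1_on (D : R -> Prop) (f : R -> R) : Prop := exists f', is_C1_on D f f'.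

(* the derivative of a C^1 function on [-h,0] (unique on [-h,0] when h > 0) *)
Definition dC1 (h : R) (f : R -> R) : R -> R :=
  epsilon (inhabits (fun _ : R => 0)) (fun f' => is_C1_on (seg h) f f').

Definition norm0 (h : R) (f : R -> R) : R :=
  real (Lub_Rbar (fun y => exists s, seg h s /\ y = Rabs (f s))).

Definition norm0_2 (h : R) (f g : R -> R) : R := Rmax (norm0 h f) (norm0 h g).
Definition norm1_2 (h : R) (f g : R -> R) : R :=
  norm0_2 h f g + norm0_2 h (dC1 h f) (dC1 h g).
Definition norm1 (h : R) (f : R -> R) : R := norm0 h f + norm0 h (dC1 h f).

(* U = C^1([-h,0],R) x C^1([-h,0],I),  I = (Rm, oo) *)
Definition inU (h Rm : R) (f g : R -> R) : Prop :=
  C1_on (seg h) f /\ C1_on (seg h) g /\ (forall s, seg h s -> Rm < g s).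

Definition inUp (h : R) (f g : R -> R) : Prop :=
  C1_on (seg h) f /\ C1_on (seg h) g /\ (forall s, seg h s -> 0 <= f s /\ 0 <= g s).

Definition C1nonneg (h : R) (f : R -> R) : Prop :=
  C1_on (seg h) f /\ (forall s, seg h s -> 0 <= f s).

Definition functional := (R -> R) -> (R -> R) -> R.

Definition respects (h : R) (j : functional) : Prop :=
  forall f g f2 g2, eq_on (seg h) f f2 -> eq_on (seg h) g g2 -> j f g = j f2 g2.

Definition cond_S (h Rm : R) (j : functional) : Prop :=
  exists De : (R -> R) -> (R -> R) -> functional,
    (* De f g is a map on C([-h,0],R^2) *)
    (forall f g c1 c2 d1 d2, eq_on (seg h) c1 d1 -> eq_on (seg h) c2 d2 ->
        De f g c1 c2 = De f g d1 d2) /\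
    (forall f g, inU h Rm f g -> forall a b c1 c2 d1 d2,
        cont_on (seg h) c1 -> cont_on (seg h) c2 ->
        cont_on (seg h) d1 -> cont_on (seg h) d2 ->
        De f g (fun s => a * c1 s + b * d1 s) (fun s => a * c2 s + b * d2 s)
        = a * De f g c1 c2 + b * De f g d1 d2) /\
    (* its restriction to C^1 is the Frechet derivative Dj(f,g) of j *)
    (forall f g, inU h Rm f g -> forall eps, 0 < eps -> exists delta, 0 < delta /\
        forall c1 c2, C1_on (seg h) c1 -> C1_on (seg h) c2 ->
          norm1_2 h c1 c2 < delta -> inU h Rm (fadd f c1) (fadd g c2) ->
          Rabs (j (fadd f c1) (fadd g c2) - j f g - De f g c1 c2)
            <= eps * norm1_2 h c1 c2) /\
    (* j is C^1: (f,g) |-> Dj(f,g) is continuous in operator norm *)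
    (forall f g, inU h Rm f g -> forall eps, 0 < eps -> exists delta, 0 < delta /\
        forall f2 g2, inU h Rm f2 g2 -> norm1_2 h (fsub f2 f) (fsub g2 g) < delta ->
        forall c1 c2, C1_on (seg h) c1 -> C1_on (seg h) c2 ->
          Rabs (De f2 g2 c1 c2 - De f g c1 c2) <= eps * norm1_2 h c1 c2) /\
    (forall f g c1 c2, inU h Rm f g -> cont_on (seg h) c1 -> cont_on (seg h) c2 ->
      forall eps, 0 < eps -> exists delta, 0 < delta /\
        forall f2 g2 d1 d2, inU h Rm f2 g2 -> cont_on (seg h) d1 -> cont_on (seg h) d2 ->
          norm1_2 h (fsub f2 f) (fsub g2 g) < delta ->
          norm0_2 h (fsub d1 c1) (fsub d2 c2) < delta ->
          Rabs (De f2 g2 d1 d2 - De f g c1 c2) < eps).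

Definition cond_sLb (h : R) (j : functional) : Prop :=
  forall B : (R -> R) -> (R -> R) -> Prop,
    (forall f g, B f g -> inUp h f g) ->
    (exists c, forall f g, B f g -> norm1_2 h f g <= c) ->
    exists L, forall f g f2 g2, B f g -> B f2 g2 ->
      Rabs (j f g - j f2 g2) <= L * norm0_2 h (fsub f f2) (fsub g g2).

Definition H1 (h Rm : R) (j : functional) : Prop :=
  respects h j /\ cond_S h Rm j /\ cond_sLb h j /\
  (forall f g, inUp h f g -> 0 <= j f g) /\
  (forall B1 B2 : (R -> R) -> Prop,
     (forall f, B1 f -> C1nonneg h f) -> (forall g, B2 g -> C1nonneg h g) ->
     (exists c, forall f, B1 f -> norm1 h f <= c) ->
     exists M, forall f g, B1 f -> B2 g -> Rabs (j f g) <= M).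

Definition H2 (Rm : R) (q : R -> R) : Prop :=
  (exists M, forall x, Rm < x -> Rabs (q x) <= M) /\
  (forall x, Rm < x -> ex_derive q x /\ continuous (Derive q) x).

Definition inX (h Rm mu : R) (q : R -> R) (j : functional) (f g : R -> R) : Prop :=
  inU h Rm f g /\
  dC1 h f 0 = q (g 0) * f 0 /\
  dC1 h g 0 = j f g - mu * g 0.

Definition inXp (h Rm mu : R) (q : R -> R) (j : functional) (f g : R -> R) : Prop :=
  inX h Rm mu q j f g /\ inUp h f g.

Definition H3 (h Rm mu : R) (q : R -> R) (j : functional) : Prop :=
  exists f g, inXp h Rm mu q j f g.

Definition shift (x : R -> R) (t : R) : R -> R := fun s => x (t + s).

Definition is_solution (h Rm mu : R) (q : R -> R) (j : functional)
    (f g w v : R -> R) : Prop :=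
  C1_on (fun s => -h <= s) w /\ C1_on (fun s => -h <= s) v /\
  (forall s, seg h s -> w s = f s /\ v s = g s) /\
  (forall t, 0 <= t -> inU h Rm (shift w t) (shift v t)) /\
  (forall t, 0 < t ->
     is_derive w t (q (v t) * w t) /\
     is_derive v t (j (shift w t) (shift v t) - mu * v t)).

(* Main.v *)
Require Import Defs.
From Stdlib Require Import Reals Lra.
From Coquelicot Require Import Coquelicot.
Open Scope R_scope.

Lemma A_deriv (a : R -> R) (t1 : R) : 0 < t1 ->
  (forall t, 0 < t -> continuous a t) ->
  forall t, 0 < t -> is_derive (fun x => RInt a t1 x) t (a t).
Proof.
  intros H1 Hc t Ht.
  apply (is_derive_RInt a (fun x => RInt a t1 x) t1 t); [|now apply Hc].
  assert (Hp : 0 < t/2) by lra.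
  exists (mkposreal _ Hp). intros y Hy.
  apply (RInt_correct (V := R_CompleteNormedModule)).
  apply ex_RInt_continuous. intros z Hz. apply Hc.
  cbn in Hy. unfold AbsRing_ball, abs, minus, plus, opp in Hy; simpl in Hy.
  apply Rabs_def2 in Hy.
  revert Hz; unfold Rmin, Rmax; destruct Rle_dec; lra.
Qed.

Lemma key (a w : R -> R) (t1 : R) : 0 < t1 ->
  (forall t, 0 < t -> continuous a t) ->
  (forall t, 0 < t -> is_derive w t (a t * w t)) ->
  forall t, t1 <= t -> w t = w t1 * exp (RInt a t1 t).
Proof.
  intros H1 Hc Hw t Ht.
  set (z := fun x => w x * exp (- RInt a t1 x)).
  assert (Hz : forall x, 0 < x -> is_derive z x 0).
  { intros x Hx. unfold z.
    assert (HA := A_deriv a t1 H1 Hc x Hx).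
    assert (He : is_derive (fun y => exp (- RInt a t1 y)) x (- a x * exp (- RInt a t1 x))).
    { apply (is_derive_comp exp (fun y => - RInt a t1 y) x).
      - apply is_derive_exp.
      - now apply (is_derive_opp (fun y => RInt a t1 y)). }
    assert (HM := is_derive_mult _ _ x _ _ (Hw x Hx) He (fun n m => Rmult_comm n m)).
    replace 0 with (plus (mult (a x * w x) (exp (- RInt a t1 x)))
          (mult (w x) (- a x * exp (- RInt a t1 x)))) by (cbn; ring).
    exact HM. }
  assert (Hct : forall x, 0 < x -> continuity_pt z x).
  { intros x Hx. apply continuity_pt_filterlim. apply (ex_derive_continuous (V := R_NormedModule)).
    exists 0. now apply Hz. }
  destruct (MVT_gen z t1 t (fun _ => 0)) as [c [Hc1 Hc2]].
  { intros x Hx. apply Hz. revert Hx; unfold Rmin, Rmax; destruct Rle_dec; lra. }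
  { intros x Hx. apply Hct. revert Hx; unfold Rmin, Rmax; destruct Rle_dec; lra. }
  unfold z in Hc2. assert (Z : RInt a t1 t1 = 0) by (apply (RInt_point t1 a)).
  rewrite Z, Ropp_0, exp_0 in Hc2.
  assert (E : w t = w t * exp (- RInt a t1 t) * exp (RInt a t1 t)).
  { rewrite Rmult_assoc, <- exp_plus. replace (- RInt a t1 t + RInt a t1 t) with 0 by ring.
    rewrite exp_0; ring. }
  rewrite E. f_equal. rewrite Rmult_0_l, Rmult_1_r in Hc2. apply Rminus_diag_uniq. exact Hc2.
Qed.


Theorem lemma17 (h Rm mu : R) (q : R -> R) (j : functional)
    (f g w v : R -> R) :
  0 < h -> Rm < 0 -> 0 <= mu ->
  H1 h Rm j -> H2 Rm q -> H3 h Rm mu q j -> 0 < q 0 ->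
  inXp h Rm mu q j f g -> 0 < f 0 ->
  is_solution h Rm mu q j f g w v ->
  (forall t, 0 <= t -> inXp h Rm mu q j (shift w t) (shift v t)) ->
  (is_lim v p_infty 0 -> is_lim w p_infty p_infty) /\
  ~ (is_lim w p_infty 0 /\ is_lim v p_infty 0).
Proof.
  intros Hh HRm Hmu _ [_ Hq] _ Hq0 _ Hf0 [HCw [HCv [Hinit [HU Hder]]]] _.
  assert (Hw0 : w 0 = f 0) by (apply (Hinit 0); split; lra).
  assert (Ht1 : exists t1, 0 < t1 /\ 0 < w t1).
  { destruct HCw as [w' [_ Hd]].
    destruct (Hd 0 ltac:(lra) 1 ltac:(lra)) as [d [Hd0 Hdd]].
    set (K := Rabs (w' 0) + 1).
    assert (HK : 0 < K) by (unfold K; pose proof (Rabs_pos (w' 0)); lra).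
    set (y := Rmin (d/2) (w 0 / (2*K))).
    assert (Hy1 : 0 < y) by (unfold y; apply Rmin_pos; [lra | apply Rdiv_lt_0_compat; lra]).
    assert (Hy2 : y <= d/2) by apply Rmin_l.
    assert (Hy3 : y <= w 0 / (2*K)) by apply Rmin_r.
    exists y. split; [lra|].
    assert (H := Hdd y ltac:(lra)).
    rewrite Rminus_0_r, Rabs_pos_eq in H by lra.
    specialize (H ltac:(lra)).
    apply Rabs_le_between in H.
    assert (Hw' : - K <= w' 0 - 1) by (unfold K; pose proof (Rle_abs (- w' 0)) as Hr; rewrite Rabs_Ropp in Hr; lra).
    assert (E : w y - w 0 = (w y - w 0) / y * y) by (field; lra).
    assert (HKy : K * y <= w 0 / 2).
    { replace (w 0 / 2) with (K * (w 0 / (2*K))) by (field; lra).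
      apply Rmult_le_compat_l; lra. }
    nra. }
  destruct Ht1 as [t1 [Ht1 Hwt1]].
  set (a := fun t => q (v t)).
  assert (Hvc : forall t, 0 < t -> Rm < v t).
  { intros t Ht. destruct (HU t ltac:(lra)) as [_ [_ H]].
    specialize (H 0 ltac:(split; lra)). unfold shift in H. rewrite Rplus_0_r in H. exact H. }
  assert (Hac : forall t, 0 < t -> continuous a t).
  { intros t Ht. unfold a. apply (continuous_comp v q).
    - apply (ex_derive_continuous (V := R_NormedModule)). eexists. apply (Hder t Ht).
    - apply (ex_derive_continuous (V := R_NormedModule)). apply (Hq (v t) (Hvc t Ht)). }
  assert (Hwd : forall t, 0 < t -> is_derive w t (a t * w t)) by (intros; apply Hder; lra).
  assert (Hkey := key a w t1 Ht1 Hac Hwd).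
  assert (Part1 : is_lim v p_infty 0 -> is_lim w p_infty p_infty).
  { intros Hv.
    assert (Hq0c : continuous q 0) by (apply (ex_derive_continuous (V := R_NormedModule)); apply (Hq 0 HRm)).
    assert (Hc0 : 0 < q 0 / 2) by lra.
    destruct (proj1 (filterlim_locally q (q 0)) Hq0c (mkposreal _ Hc0)) as [dq Hdq].
    apply is_lim_spec in Hv. destruct (Hv dq) as [M HM].
    set (T := Rmax M t1 + 1).
    assert (HT1 : M < T) by (unfold T; pose proof (Rmax_l M t1); lra).
    assert (HT2 : t1 < T) by (unfold T; pose proof (Rmax_r M t1); lra).
    assert (Ha : forall t, T <= t -> q 0 / 2 < a t).
    { intros t Ht. unfold a. assert (H := HM t ltac:(lra)).
      assert (H2 : ball 0 dq (v t)) by (cbn; unfold AbsRing_ball, abs, minus, plus, opp; simpl; rewrite Rminus_0_r in H; rewrite Ropp_0, Rplus_0_r; exact H).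
      specialize (Hdq _ H2). revert Hdq; cbn; unfold AbsRing_ball, abs, minus, plus, opp; simpl.
      intro H3. apply Rabs_def2 in H3. lra. }
    set (A := fun x => RInt a t1 x).
    assert (HA : forall t, T <= t -> A T + q 0 / 2 * (t - T) <= A t).
    { intros t Ht.
      destruct (MVT_gen A T t a) as [c [Hc1 Hc2]].
      { intros x Hx. apply (A_deriv a t1 Ht1 Hac).
        revert Hx; unfold Rmin, Rmax; destruct Rle_dec; lra. }
      { intros x Hx. apply continuity_pt_filterlim. apply (ex_derive_continuous (V := R_NormedModule)).
        eexists. apply (A_deriv a t1 Ht1 Hac). revert Hx; unfold Rmin, Rmax; destruct Rle_dec; lra. }
      revert Hc1; unfold Rmin, Rmax; destruct Rle_dec; intro Hc1; [|lra].
      assert (Hac' := Ha c ltac:(lra)). nra. }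
    set (K := w t1 * exp (A T)).
    assert (HK : 0 < K) by (unfold K; pose proof (exp_pos (A T)); nra).
    assert (Hlow : forall t, T <= t -> K * (1 + q 0 / 2 * (t - T)) <= w t).
    { intros t Ht. rewrite (Hkey t ltac:(lra)). fold (A t). unfold K.
      replace (exp (A t)) with (exp (A T) * exp (A t - A T))
        by (rewrite <- exp_plus; f_equal; ring).
      pose proof (exp_ineq1_le (A t - A T)). pose proof (HA t Ht).
      pose proof (exp_pos (A T)).
      assert (1 + q 0 / 2 * (t - T) <= exp (A t - A T)) by lra.
      rewrite <- Rmult_assoc. apply Rmult_le_compat_l; nra. }
    apply is_lim_spec. simpl. intro M'.
    assert (HKc : 0 < K * (q 0 / 2)) by nra.
    exists (T + Rabs M' / (K * (q 0 / 2))).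
    intros x Hx.
    assert (Hd : 0 <= Rabs M' / (K * (q 0 / 2))) by (apply Rdiv_le_0_compat; [apply Rabs_pos | lra]).
    assert (H := Hlow x ltac:(lra)).
    assert (E : Rabs M' = K * (q 0 / 2) * (Rabs M' / (K * (q 0 / 2)))) by (field; lra).
    pose proof (Rle_abs M').
    assert (K * (q 0 / 2) * (Rabs M' / (K * (q 0 / 2))) < K * (q 0 / 2) * (x - T))
      by (apply Rmult_lt_compat_l; lra).
    nra. }
  split; [exact Part1|].
  intros [Hw Hv]. apply Part1 in Hv.
  apply is_lim_unique in Hw. apply is_lim_unique in Hv. rewrite Hw in Hv. discriminate.
Qed.
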